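(* Let $X\subset\mathbb{R}^n$ be a nonempty compact convex set with diameter $D_X:=\max_{x,y\in X}\|x-y\|$ (Euclidean norm). Let $u\in X$, $g\in\mathbb{R}^n$, $\beta>0$, $\eta>0$, and let $\phi(x):=\langle g,x\rangle+\frac{\beta}{2}\|x-u\|^2$. Consider the ACGM procedure described in the context, with tolerances $\delta^t\ge 0$. Let $\{\lambda^t\}_{t\ge1}\subset[0,1]$ be any predetermined sequence with $\lambda^1=1$, and define $\Lambda^1:=1$ and $\Lambda^t:=\Lambda^{t-1}(1-\lambda^t)$ for $t>1$. Suppose the step sizes $\alpha^t$ of the procedure are chosen so that $$\phi(u^t)\le \phi\big((1-\lambda^t)u^{t-1}+\lambda^t v^t\big)\quad\text{for all } t\ge 1 .$$ Then for all $t\ge 2$ (for which the iterates $u^1,\dots,u^t$ have been generated), $$\sum_{j=2}^t \frac{\lambda^j}{\Lambda^j}\max_{x\in X}\langle\nabla\phi(u^{j-1}),u^{j-1}-x\rangle \le \Big[\delta^1+\sum_{j=2}^t\frac{\lambda^j}{\Lambda^j}\Big(\delta^j+\Lambda^{j-1}\sum_{i=1}^{j-1}\frac{\lambda^i}{\Lambda^i}\delta^i\Big)\Big] + \frac{\beta D_X^2}{2}\Big[1+\sum_{j=2}^t\frac{\lambda^j}{\Lambda^j}\Big(\lambda^j+\Lambda^{j-1}\sum_{i=1}^{j-1}\frac{(\lambda^i)^2}{\Lambda^i}\Big)\Big].$$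
   Context: Note $\nabla\phi(x)=g+\beta(x-u)$. ACGM (approximate conditional gradient method) procedure for $\min_{x\in X}\phi(x)$, with input $u,g,\beta,\eta$ and a sequence of tolerances $\delta^t\ge0$: set $u^0:=u$. For $t=1,2,\dots$: compute $v^t\in X$ such that $\langle\nabla\phi(u^{t-1}),v^t-x\rangle\le\delta^t$ for all $x\in X$ (an approximate solution of the linear subproblem $\min_{x\in X}\langle\nabla\phi(u^{t-1}),x\rangle$). If $\langle\nabla\phi(u^{t-1}),u^{t-1}-v^t\rangle\le\eta-\delta^t$, stop and output $u^+:=u^{t-1}$. Otherwise set $u^t:=(1-\alpha^t)u^{t-1}+\alpha^t v^t$ with some step size $\alpha^t\in[0,1]$, and continue. *)

(* Defs.v *)
From HB Require Import structures.
From mathcomp Require Import all_boot all_order all_algebra.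
From mathcomp Require Import all_classical all_reals all_analysis.
Set Implicit Arguments. Unset Strict Implicit. Unset Printing Implicit Defensive.
Import Order.TTheory GRing.Theory Num.Theory.
Import numFieldNormedType.Exports.
Local Open Scope classical_set_scope.
Local Open Scope ring_scope.

Definition dotp (R : realType) (n : nat) (x y : 'rV[R]_n) : R :=
  \sum_(i < n) x ord0 i * y ord0 i.

Definition enorm (R : realType) (n : nat) (x : 'rV[R]_n) : R :=
  Num.sqrt (dotp x x).

Definition convex_set_rV (R : realType) (n : nat) (X : set 'rV[R]_n) : Prop :=
  forall x y, X x -> X y -> forall a : R, 0 <= a -> a <= 1 ->
    X ((1 - a) *: x + a *: y).

Definition is_diameter (R : realType) (n : nat) (X : set 'rV[R]_n) (D : R) : Prop :=
  (forall x y, X x -> X y -> enorm (x - y) <= D) /\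
  (exists x y, X x /\ X y /\ enorm (x - y) = D).

Definition phi (R : realType) (n : nat) (g u : 'rV[R]_n) (beta : R) (x : 'rV[R]_n) : R :=
  dotp g x + beta / 2 * (enorm (x - u)) ^+ 2.

Definition grad_phi (R : realType) (n : nat) (g u : 'rV[R]_n) (beta : R) (x : 'rV[R]_n)
  : 'rV[R]_n := g + beta *: (x - u).

(* max_{x in X} <c, y - x>, written as the supremum (attained for X compact nonempty). *)
Definition maxgap (R : realType) (n : nat) (X : set 'rV[R]_n) (c y : 'rV[R]_n) : R :=
  sup [set dotp c (y - x) | x in X].

(* Lambda^1 = 1, Lambda^t = Lambda^{t-1} (1 - lambda^t) for t > 1
   (Lambda^0 = 1 is an unused convention). *)
Fixpoint Lam (R : realType) (lam : nat -> R) (t : nat) : R :=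
  match t with
  | 0 => 1
  | 1 => 1
  | t'.+1 => Lam lam t' * (1 - lam t)
  end.

(* The iterates u^0..u^T of ACGM with tolerances delta, step sizes alpha,
   LMO outputs v, have all been generated (no stop before producing u^T),
   and the step sizes satisfy phi(u^t) <= phi((1-lambda^t) u^{t-1} + lambda^t v^t). *)
Definition ACGM_run (R : realType) (n : nat) (X : set 'rV[R]_n) (u g : 'rV[R]_n)
  (beta eta : R) (delta alpha lam : nat -> R) (us vs : nat -> 'rV[R]_n) (T : nat) : Prop :=
  us 0%N = u /\
  forall t, (1 <= t <= T)%N ->
    [/\ X (vs t) /\
          (forall x, X x -> dotp (grad_phi g u beta (us t.-1)) (vs t - x) <= delta t),
        eta - delta t < dotp (grad_phi g u beta (us t.-1)) (us t.-1 - vs t),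
        0 <= alpha t /\ alpha t <= 1,
        us t = (1 - alpha t) *: us t.-1 + alpha t *: vs t &
        phi g u beta (us t) <= phi g u beta ((1 - lam t) *: us t.-1 + lam t *: vs t)].

(* Main.v *)
Require Import Defs.
From HB Require Import structures.
From mathcomp Require Import all_boot all_order all_algebra.
From mathcomp Require Import all_classical all_reals all_analysis.
From mathcomp Require Import ring lra.
Import Order.TTheory GRing.Theory Num.Theory.
Import numFieldNormedType.Exports.
Local Open Scope classical_set_scope.
Local Open Scope ring_scope.

Arguments Lam {R} lam t : simpl never.
Section Abs.
Variables (R : realType) (lam h c G : nat -> R) (T : nat).
Hypothesis hlam : forall {t}, (1 <= t)%N -> 0 <= lam t /\ lam t <= 1.
Hypothesis hlam1 : lam 1%N = 1.
Hypothesis hh : forall {t}, (1 <= t <= T)%N -> 0 <= h t.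
Hypothesis hA : forall {j}, (2 <= j <= T)%N -> lam j * G j <= h j.-1 - h j + c j.
Hypothesis hB : forall {t}, (1 <= t <= T)%N -> h t <= (1 - lam t) * h t.-1 + c t.

Lemma LamS t : (1 <= t)%N -> Lam lam t.+1 = Lam lam t * (1 - lam t.+1).
Proof. by case: t. Qed.

Lemma Lam_ge0 t : 0 <= Lam lam t.
Proof.
elim: t => [|t IH]; first by [].
case: t IH => [|t] IH; first by [].
rewrite LamS //; apply: mulr_ge0 => //.
have [_ ?] := hlam (t:=t.+2) isT; lra.
Qed.

Lemma Lam_pos_prev {t} : (1 <= t)%N -> 0 < Lam lam t.+1 -> 0 < Lam lam t /\ 0 < 1 - lam t.+1.
Proof.
move=> t1; rewrite LamS // => hp.
have h0 := Lam_ge0 t.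
have [? ?] := hlam (t:=t.+1) isT.
have h1 : 0 <= 1 - lam t.+1 by lra.
split.
- rewrite lt_neqAle h0 andbT; apply/eqP => E; move: hp; rewrite -E mul0r; lra.
- rewrite lt_neqAle h1 andbT; apply/eqP => E; move: hp; rewrite -E mulr0; lra.
Qed.

Lemma step3 {t} : (1 <= t <= T)%N -> 0 < Lam lam t ->
  h t <= Lam lam t * \sum_(1 <= i < t.+1) c i / Lam lam i.
Proof.
elim: t => [|t IH] //.
case: t IH => [|t] IH.
  move=> hT _; rewrite big_nat1 /= mul1r divr1.
  have := hB hT; rewrite hlam1 /=; lra.
move=> /andP[_ tT] hp.
have [hp1 hp2] := Lam_pos_prev (isT : (1 <= t.+1)%N) hp.
have tT' : (1 <= t.+1 <= T)%N by apply/andP; split => //; apply: ltnW.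
have IH' := IH tT' hp1.
rewrite big_nat_recr //=.
have := hB (t:=t.+2); rewrite tT /= => /(_ isT) hb2.
rewrite LamS // in hp *.
have e : Lam lam t.+1 * (1 - lam t.+2) * (c t.+2 / (Lam lam t.+1 * (1 - lam t.+2))) = c t.+2.
  by field; apply/andP; split; rewrite gt_eqF.
rewrite mulrDr e.
have : (1 - lam t.+2) * h t.+1 <= (1 - lam t.+2) * (Lam lam t.+1 * \sum_(1 <= i < t.+2) c i / Lam lam i).
  by apply: ler_wpM2l => //; apply: ltW.
move: hb2 => /=; rewrite (mulrC (Lam _ _) (1 - _)) -mulrA; lra.
Qed.

Lemma step2 {N} : (1 <= N <= T)%N ->
  \sum_(2 <= j < N.+1) (h j.-1 - h j) / Lam lam j + h N / Lam lam N
  <= h 1%N + \sum_(2 <= j < N.+1) lam j / Lam lam j * h j.-1.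
Proof.
elim: N => [|N IH] //.
case: N IH => [|N] IH.
  by move=> _; rewrite !big_geq //= divr1 !add0r addr0.
move=> /andP[_ NT].
have NT' : (1 <= N.+1 <= T)%N by apply/andP; split => //; apply: ltnW.
have IH' := IH NT'.
rewrite !(big_nat_recr N.+2) //=.
have hN := hh NT'.
suff : h N.+1 / Lam lam N.+2 <= h N.+1 / Lam lam N.+1 + lam N.+2 / Lam lam N.+2 * h N.+1.
  move=> H.
  have e : (h N.+1 - h N.+2) / Lam lam N.+2 + h N.+2 / Lam lam N.+2 = h N.+1 / Lam lam N.+2.
    by rewrite -mulrDl subrK.
  lra.
have [z|p] := eqVneq (Lam lam N.+2) 0.
  rewrite z invr0 !mulr0 mul0r addr0; apply: divr_ge0 => //; exact: Lam_ge0.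
have hp : 0 < Lam lam N.+2 by rewrite lt_neqAle eq_sym p Lam_ge0.
have [hp1 hp2] := Lam_pos_prev (isT : (1 <= N.+1)%N) hp.
rewrite LamS //.
rewrite le_eqVlt; apply/orP; left; apply/eqP; field.
by apply/andP; split; rewrite gt_eqF.
Qed.

Lemma abs_main : (2 <= T)%N ->
  \sum_(2 <= j < T.+1) lam j / Lam lam j * G j <=
  c 1%N + \sum_(2 <= j < T.+1) (c j / Lam lam j +
      lam j / Lam lam j * (Lam lam j.-1 * \sum_(1 <= i < j) c i / Lam lam i)).
Proof.
move=> T2.
have T1 : (1 <= T <= T)%N by rewrite leqnn andbT; apply: ltnW.
apply: le_trans (_ : \sum_(2 <= j < T.+1) ((h j.-1 - h j) / Lam lam j + c j / Lam lam j) <= _).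
  rewrite big_nat_cond [X in _ <= X]big_nat_cond; apply: ler_sum => j /andP[/andP[j2 jT] _].
  rewrite -mulrDl mulrAC; apply: ler_wpM2r; first by rewrite invr_ge0 Lam_ge0.
  by apply: hA; rewrite j2.
rewrite big_split /=.
have S2 := step2 (N:=T) T1.
have hT := hh T1.
have hT' : 0 <= h T / Lam lam T by apply: divr_ge0 => //; exact: Lam_ge0.
have h1 : h 1%N <= c 1%N.
  have := hB (t:=1); rewrite (leq_trans _ T2) // hlam1 subrr mul0r add0r; by apply.
have S3 : \sum_(2 <= j < T.+1) lam j / Lam lam j * h j.-1 <=
  \sum_(2 <= j < T.+1) lam j / Lam lam j * (Lam lam j.-1 * \sum_(1 <= i < j) c i / Lam lam i).
  rewrite big_nat_cond [X in _ <= X]big_nat_cond; apply: ler_sum => j /andP[/andP[j2 jT] _].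
  case: j j2 jT => [|[|j]] // _ jT.
  have [z|p] := eqVneq (Lam lam j.+2) 0.
    by rewrite z invr0 !mulr0 !mul0r.
  have hp : 0 < Lam lam j.+2 by rewrite lt_neqAle eq_sym p Lam_ge0.
  have [hp1 _] := Lam_pos_prev (isT : (1 <= j.+1)%N) hp.
  apply: ler_wpM2l.
    apply: divr_ge0; [by case: (hlam (t:=j.+2) isT) | exact: Lam_ge0].
  apply: step3 => //.
  by rewrite /= ltnW.
rewrite big_split /=.
lra.
Qed.
End Abs.

Arguments Lam {R} lam t : simpl never.
Section Conc.
Variables (R : realType) (n : nat).
Implicit Types (x y z w a b : 'rV[R]_n).

Lemma dotp_ge0 x : 0 <= dotp x x.
Proof. by apply: sumr_ge0 => i _; rewrite -expr2 sqr_ge0. Qed.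

Lemma enorm_sq x : enorm x ^+ 2 = dotp x x.
Proof. by rewrite /enorm sqr_sqrtr // dotp_ge0. Qed.

Lemma dotpZr a (l : R) x : dotp a (l *: x) = l * dotp a x.
Proof. rewrite /dotp mulr_sumr; apply: eq_bigr => i _; rewrite !mxE; ring. Qed.

Lemma dotpZZ (l : R) x : dotp (l *: x) (l *: x) = l ^+ 2 * dotp x x.
Proof. rewrite /dotp mulr_sumr; apply: eq_bigr => i _; rewrite !mxE; ring. Qed.

Lemma dotp_split a v x y : dotp a (v - y) = dotp a (v - x) - dotp a (y - x).
Proof. rewrite /dotp -sumrB; apply: eq_bigr => i _; rewrite !mxE; ring. Qed.

Lemma phi_expand g u (beta : R) z w :
  phi g u beta (z + w) = phi g u beta z + dotp (grad_phi g u beta z) w + beta / 2 * dotp w w.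
Proof.
rewrite /phi !enorm_sq /grad_phi /dotp !mulr_sumr -!big_split /=.
apply: eq_bigr => i _; rewrite !mxE; by field.
Qed.

Lemma phi_lb g u (beta : R) z x : 0 <= beta ->
  phi g u beta z - dotp (grad_phi g u beta z) (z - x) <= phi g u beta x.
Proof.
move=> b0.
have -> : x = z + (x - z) by rewrite addrC subrK.
rewrite phi_expand.
have -> : z - (z + (x - z)) = - (x - z) by apply/rowP => i; rewrite !mxE; ring.
have -> : dotp (grad_phi g u beta z) (- (x - z)) = - dotp (grad_phi g u beta z) (x - z).
  by rewrite /dotp -sumrN; apply: eq_bigr => i _; rewrite !mxE; ring.
have := dotp_ge0 (x - z).
have : 0 <= beta / 2 by apply: divr_ge0.
nra.
Qed.


Lemma exists_argmin (f : nat -> R) N : exists k, (k <= N)%N /\ forall t, (t <= N)%N -> f k <= f t.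
Proof.
elim: N => [|N [k [kN hk]]].
  by exists 0%N; split => // t; rewrite leqn0 => /eqP ->.
have [le|lt] := leP (f k) (f N.+1).
  exists k; split; first by apply: leqW.
  move=> t; rewrite leq_eqVlt => /orP[/eqP ->|] //; rewrite ltnS; exact: hk.
exists N.+1; split => // t; rewrite leq_eqVlt => /orP[/eqP ->|] //; rewrite ltnS => tN.
by apply: le_trans (hk _ tN); apply: ltW.
Qed.

Variables (X : set 'rV[R]_n) (D : R) (u g : 'rV[R]_n) (beta eta : R)
  (delta alpha lam : nat -> R) (us vs : nat -> 'rV[R]_n) (T : nat).
Hypothesis hconv : convex_set_rV X.
Hypothesis hdiam : is_diameter X D.
Hypothesis hXu : X u.
Hypothesis hbeta : 0 < beta.
Hypothesis hlam : forall {t}, (1 <= t)%N -> 0 <= lam t /\ lam t <= 1.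
Hypothesis hrun : ACGM_run X u g beta eta delta alpha lam us vs T.

Lemma us_in t : (t <= T)%N -> X (us t).
Proof.
case: hrun => h0 hr.
elim: t => [|t IH] tT; first by rewrite h0.
have := hr t.+1; rewrite tT /= => /(_ isT) [[Xv _] _ [a0 a1] -> _].
by apply: hconv => //; apply: IH; apply: ltnW.
Qed.

Definition cc t := lam t * delta t + beta * D ^+ 2 / 2 * lam t ^+ 2.
Notation G := (grad_phi g u beta).
Notation ph := (phi g u beta).

Lemma stepA t x : (1 <= t <= T)%N -> X x ->
  lam t * dotp (G (us t.-1)) (us t.-1 - x) <= ph (us t.-1) - ph (us t) + cc t.
Proof.
move=> tT Xx.
have Xa : X (us t.-1) by apply: us_in; case/andP: tT => t1 tT; rewrite (leq_trans (leq_pred t)).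
case: hrun => _ /(_ t tT) [[Xv hv] _ _ _ hphi].
have [l0 l1] := hlam (t:=t) (proj1 (andP tT)).
move: Xa Xv hv hphi l0 l1; set a := us t.-1; set v := vs t; set l := lam t; move=> Xa Xv hv hphi l0 l1.
have ey : (1 - l) *: a + l *: v = a + l *: (v - a).
  by apply/rowP => i; rewrite !mxE; ring.
rewrite ey in hphi.
rewrite phi_expand dotpZr dotpZZ (dotp_split _ _ x) in hphi.
have hvx := hv x Xx.
have hd : dotp (v - a) (v - a) <= D ^+ 2.
  rewrite -enorm_sq; case: hdiam => hd _; have := hd _ _ Xv Xa.
  have := sqrtr_ge0 (dotp (v - a) (v - a)); rewrite -/(enorm (v - a)) => e0 eD.
  by rewrite !expr2; apply: ler_pM.
have p1 : l * dotp (G a) (v - x) <= l * delta t by apply: ler_wpM2l.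
have p2 : beta / 2 * (l ^+ 2 * dotp (v - a) (v - a)) <= beta / 2 * (l ^+ 2 * D ^+ 2).
  apply: ler_wpM2l; first by apply: divr_ge0 => //; apply: ltW.
  by apply: ler_wpM2l => //; apply: sqr_ge0.
rewrite /cc.
have e : beta * D ^+ 2 / 2 * l ^+ 2 = beta / 2 * (l ^+ 2 * D ^+ 2) by ring.
rewrite e; move: hphi p1 p2; rewrite mulrBr -/l; lra.
Qed.

End Conc.

Theorem mainTheorem1 (R : realType) (n : nat) (X : set 'rV[R]_n) (D : R)
  (u g : 'rV[R]_n) (beta eta : R) (delta alpha lam : nat -> R)
  (us vs : nat -> 'rV[R]_n) (T : nat) :
  X !=set0 -> compact X -> convex_set_rV X -> is_diameter X D ->
  X u -> 0 < beta -> 0 < eta ->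
  (forall t, (1 <= t)%N -> 0 <= delta t) ->
  (forall t, (1 <= t)%N -> 0 <= lam t /\ lam t <= 1) ->
  lam 1%N = 1 ->
  ACGM_run X u g beta eta delta alpha lam us vs T ->
  (2 <= T)%N ->
  \sum_(2 <= j < T.+1) lam j / Lam lam j * maxgap X (grad_phi g u beta (us j.-1)) (us j.-1)
  <= (delta 1%N + \sum_(2 <= j < T.+1) lam j / Lam lam j *
        (delta j + Lam lam j.-1 * \sum_(1 <= i < j) lam i / Lam lam i * delta i))
     + beta * D ^+ 2 / 2 *
       (1 + \sum_(2 <= j < T.+1) lam j / Lam lam j *
        (lam j + Lam lam j.-1 * \sum_(1 <= i < j) lam i ^+ 2 / Lam lam i)).
Proof.
move=> [x0 Xx0] _ hconv hdiam hXu hb he hdel hlam hlam1 hrun T2.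
have [k [kT hk]] := @exists_argmin R (fun t => phi g u beta (us t)) T.
pose h := fun t => phi g u beta (us t) - phi g u beta (us k).
pose c := @cc R D beta delta lam.
pose Gs := fun j => maxgap X (grad_phi g u beta (us j.-1)) (us j.-1).
have SA := @stepA _ _ _ _ _ _ _ _ _ _ _ _ _ _ hconv hdiam hXu hb hlam hrun.
have hh : forall t, (1 <= t <= T)%N -> 0 <= h t.
  move=> t /andP[_ tT]; rewrite /h subr_ge0; exact: hk.
have hA : forall j, (2 <= j <= T)%N -> lam j * Gs j <= h j.-1 - h j + c j.
  move=> j /andP[j2 jT].
  have j1 : (1 <= j <= T)%N by rewrite jT (leq_trans _ j2).
  have -> : h j.-1 - h j = phi g u beta (us j.-1) - phi g u beta (us j) by rewrite /h; ring.
  have [l0 _] := hlam j (leq_trans (isT : (1 <= 2)%N) j2).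
  have [z|p] := eqVneq (lam j) 0.
    rewrite z mul0r; have := SA j x0 j1 Xx0; rewrite z mul0r; exact.
  have lp : 0 < lam j by rewrite lt_neqAle eq_sym p l0.
  rewrite mulrC -ler_pdivlMr //; apply: ge_sup.
    by exists (dotp (grad_phi g u beta (us j.-1)) (us j.-1 - x0)); exists x0.
  move=> r [x Xx <-]; rewrite ler_pdivlMr // mulrC; exact: SA.
have hB : forall t, (1 <= t <= T)%N -> h t <= (1 - lam t) * h t.-1 + c t.
  move=> t t1.
  have Xk := @us_in _ _ _ _ _ _ _ _ _ _ _ _ _ hconv hXu hrun k kT.
  have := SA t (us k) t1 Xk.
  have := @phi_lb R n g u beta (us t.-1) (us k) (ltW hb).
  have [l0 _] := hlam t (proj1 (andP t1)).
  rewrite /h.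
  set d := dotp _ _; set P1 := phi g u beta (us t.-1); set P0 := phi g u beta (us t); set Pk := phi g u beta (us k).
  move=> H1 H2.
  have : lam t * (P1 - Pk) <= lam t * d by apply: ler_wpM2l => //; lra.
  rewrite /c; lra.
have M := @abs_main _ _ _ _ _ _ hlam hlam1 hh hA hB T2.
apply: (le_trans M).
set K := beta * D ^+ 2 / 2.
have ec : forall i, c i / Lam lam i = lam i / Lam lam i * delta i + K * (lam i ^+ 2 / Lam lam i).
  by move=> i; rewrite /c /cc /K; ring.
have es : forall j, \sum_(1 <= i < j) c i / Lam lam i =
    \sum_(1 <= i < j) lam i / Lam lam i * delta i + K * \sum_(1 <= i < j) lam i ^+ 2 / Lam lam i.
  by move=> j; rewrite mulr_sumr -big_split; apply: eq_bigr => i _; exact: ec.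
have c1 : c 1%N = delta 1%N + K by rewrite /c /cc hlam1 /K; ring.
rewrite c1 mulrDr mulr1 mulr_sumr addrACA -big_split /=.
rewrite le_eqVlt; apply/orP; left; apply/eqP; congr (_ + _).
apply: eq_bigr => j _; rewrite es ec; ring.
Qed.
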